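(* Let $G$ be a finite nonabelian group. Then $\mathcal{X}=\bigcup_{g\in G\setminus Z(G)}\mathrm{Irr}(G/[g,G])$, and consequently $K(G)=\bigcap_{g\in G\setminus Z(G)}[g,G]$.
   Context: For $\chi\in\mathrm{Irr}(G)$, the center of $\chi$ is $Z(\chi)=\{g\in G : |\chi(g)|=\chi(1)\}$. Let $\mathcal{X}=\{\chi\in\mathrm{Irr}(G) : Z(\chi)>Z(G)\}$ (strict containment) and $K(G)=\bigcap_{\chi\in\mathcal{X}}\ker(\chi)$. For $g\in G$, $[g,G]$ is the subgroup generated by $\{[g,x] : x\in G\}$; it is normal in $G$. $\mathrm{Irr}(G/[g,G])$ is identified with the set of $\chi\in\mathrm{Irr}(G)$ with $[g,G]\le\ker(\chi)$. *)

(* Defs.v *)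
From mathcomp Require Import all_boot all_order all_algebra all_fingroup all_solvable all_field all_character.
Set Implicit Arguments. Unset Strict Implicit. Unset Printing Implicit Defensive.
Import GroupScope.

Definition calX (gT : finGroupType) (G : {group gT}) : {set Iirr G} :=
  [set i : Iirr G | 'Z(G) \proper ('Z(('chi[G]_i)%R))%CF].

Definition KG (gT : finGroupType) (G : {group gT}) : {set gT} :=
  \bigcap_(i in calX G) cfker ('chi[G]_i)%R.

Definition gcommG (gT : finGroupType) (g : gT) (G : {set gT}) : {set gT} :=
  [~: [set g], G].

(* Main.v *)
Require Import Defs.
From mathcomp Require Import all_boot all_order all_algebra all_fingroup all_solvable all_field all_character.
Import GroupScope.

Lemma gcomm_normal (gT : finGroupType) (G : {group gT}) g :
  g \in G -> gcommG g G <| G.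
Proof.
move=> Gg; apply/andP; split; last exact: normsRr.
have s1 : [set g] \subset G by rewrite sub1set.
apply: subset_trans (commSg G s1) _.
by rewrite (commg_subr G G) normG.
Qed.

Lemma key (gT : finGroupType) (G : {group gT}) (i : Iirr G) g :
  g \in G -> (g \in 'Z(('chi[G]_i)%R)%CF) = (gcommG g G \subset cfker ('chi[G]_i)%R).
Proof.
move=> Gg; set K := cfker ('chi[G]_i)%R.
have nKG : G \subset 'N(K) by apply: normal_norm; apply: cfker_normal.
have ngK : [set g] \subset 'N(K) by rewrite sub1set (subsetP nKG).
have sKZ : K \subset 'Z(('chi[G]_i)%R)%CF by apply: normal_sub; apply: cfker_center_normal.
rewrite /gcommG -quotient_cents2 // -sub1set -(quotientSGK ngK sKZ).
rewrite cfcenter_eq_center /center subsetI.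
have s1 : [set g] \subset G by rewrite sub1set.
by rewrite (quotientS _ s1).
Qed.

Theorem lemma2p5 (gT : finGroupType) (G : {group gT}) :
  ~~ abelian G ->
  calX G = [set i : Iirr G | [exists g in (G :\: 'Z(G)), gcommG g G \subset cfker ('chi[G]_i)%R]]
  /\ KG G = \bigcap_(g in (G :\: 'Z(G))) gcommG g G.
Proof.
move=> _.
have P1 : calX G = [set i : Iirr G | [exists g in (G :\: 'Z(G)), gcommG g G \subset cfker ('chi[G]_i)%R]].
  apply/setP=> i; rewrite !inE.
  have sZ : 'Z(G) \subset 'Z(('chi[G]_i)%R)%CF.
    by rewrite -cap_cfcenter_irr (bigcap_inf i).
  rewrite properE sZ /=.
  apply/subsetPn/existsP => [[g Zg nZg] | [g /andP[/setDP[Gg nZg] sub]]].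
    have Gg := subsetP (cfcenter_sub _) g Zg.
    by exists g; rewrite inE nZg Gg /= -key.
  by exists g; rewrite // key.
split=> //.
rewrite /KG P1; apply/eqP; rewrite eqEsubset; apply/andP; split.
  apply/bigcapsP=> g gin.
  have Gg : g \in G by case/setDP: gin.
  have E := cap_cfker_normal (@gcomm_normal _ G g Gg).
  apply: (subset_trans (_ : _ \subset \bigcap_(i | gcommG g G \subset cfker ('chi[G]_i)%R) cfker ('chi[G]_i)%R)); last first.
    by rewrite /gcommG E.
  apply/bigcapsP=> i sub; apply: bigcap_inf; rewrite inE.
  by apply/existsP; exists g; rewrite gin.
apply/bigcapsP=> i; rewrite inE => /existsP[g /andP[gin sub]].
exact: subset_trans (bigcap_inf g gin) sub.
Qed.
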